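(* Let $(X,d)$ be a metric space, $x\in X$, $A$ a complex Banach algebra and $\varphi\in\Delta(A)$. Let $D:Lip_dX\to\mathbb{C}$ be a bounded linear functional, and define $D_\varphi:Lip_d(X,A)\to\mathbb{C}$ by $D_\varphi(f)=D(\varphi\circ f)$. Then the following are equivalent: (i) $D$ is a point derivation at $x$, i.e. $D(fg)=f(x)D(g)+g(x)D(f)$ for all $f,g\in Lip_dX$; (ii) $D_\varphi$ is an $(x,\varphi)$-point derivation on $Lip_d(X,A)$, i.e. $D_\varphi(fg)=\varphi(f(x))D_\varphi(g)+\varphi(g(x))D_\varphi(f)$ for all $f,g\in Lip_d(X,A)$.
   Context: For a Banach algebra $A$, $Lip_d(X,A)$ is the Banach algebra (pointwise operations) of bounded functions $f:X\to A$ with $P_{d,A}(f)=\sup_{x\neq y}\|f(x)-f(y)\|_A/d(x,y)<\infty$, normed by $\|f\|_{\infty,A}+P_{d,A}(f)$; $Lip_dX=Lip_d(X,\mathbb{C})$. $\Delta(A)$ is the set of nonzero multiplicative linear functionals on $A$ (for $f\in Lip_d(X,A)$, $\varphi\circ f\in Lip_dX$). *)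

(* Defs.v *)
From HB Require Import structures.
From mathcomp Require Import all_boot all_order all_algebra.
From mathcomp Require Import all_classical all_reals all_analysis.
From mathcomp Require Import complex.
Set Implicit Arguments. Unset Strict Implicit. Unset Printing Implicit Defensive.
Import Order.TTheory GRing.Theory Num.Theory.
Import numFieldNormedType.Exports.
Local Open Scope ring_scope.
Local Open Scope complex_scope.

Section Defs.
Variable R : realType.
Local Notation C := R[i].

Definition is_metric (X : Type) (d : X -> X -> R) : Prop :=
  [/\ forall x y, 0 <= d x y,
      forall x y, d x y = 0 <-> x = y,
      forall x y, d x y = d y x &
      forall x y z, d x z <= d x y + d y z].

(* membership in Lip_d(X,V): bounded and d-Lipschitz (V a complex normed space;
   the norm of V takes real values, stored in C = R[i]) *)
Definition is_lip (X : Type) (d : X -> X -> R) (V : normedModType C)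
    (f : X -> V) : Prop :=
  (exists B : R, forall y, `|f y| <= B%:C) /\
  (exists L : R, forall y z, `|f y - f z| <= (L * d y z)%:C).

(* complex Banach algebra multiplication on the complete normed space A
   (not assumed unital or commutative) *)
Definition banach_algebra_mul (A : completeNormedModType C) (mul : A -> A -> A)
  : Prop :=
  [/\ forall a b c, mul a (mul b c) = mul (mul a b) c,
      forall a b c, mul a (b + c) = mul a b + mul a c,
      forall a b c, mul (a + b) c = mul a c + mul b c,
      forall (k : C) a b, mul (k *: a) b = k *: mul a b &
      forall (k : C) a b, mul a (k *: b) = k *: mul a b ] /\
  (forall a b, `|mul a b| <= `|a| * `|b|).

Definition in_Delta (A : completeNormedModType C) (mul : A -> A -> A)
    (phi : A -> C) : Prop :=
  [/\ forall a b, phi (a + b) = phi a + phi b,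
      forall (k : C) a, phi (k *: a) = k * phi a,
      forall a b, phi (mul a b) = phi a * phi b &
      exists a, phi a != 0].

(* The norm of Lip_d X is
   ||f||_oo + P_d(f); |D f| <= M (||f||_oo + P_d(f)) is written out as
   |D f| <= M (B + L) for every sup-bound B and every Lipschitz constant L. *)
Definition bounded_linear_lip (X : Type) (d : X -> X -> R)
    (D : (X -> C) -> C) : Prop :=
  [/\ forall f g : X -> C, @is_lip X d C^o f -> @is_lip X d C^o g ->
        D (fun y => f y + g y) = D f + D g,
      forall (k : C) (f : X -> C), @is_lip X d C^o f -> D (fun y => k * f y) = k * D f &
      exists M : R, forall f : X -> C, @is_lip X d C^o f ->
        forall B L : R, (forall y, `|f y| <= B%:C) ->
          (forall y z, `|f y - f z| <= (L * d y z)%:C) ->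
          `|D f| <= (M * (B + L))%:C ].

Definition point_derivation (X : Type) (d : X -> X -> R) (x : X)
    (D : (X -> C) -> C) : Prop :=
  forall f g : X -> C, @is_lip X d C^o f -> @is_lip X d C^o g ->
    D (fun y => f y * g y) = f x * D g + g x * D f.

Definition point_derivation_A (X : Type) (d : X -> X -> R) (x : X)
    (A : completeNormedModType C) (mul : A -> A -> A) (phi : A -> C)
    (E : (X -> A) -> C) : Prop :=
  forall f g : X -> A, is_lip d f -> is_lip d g ->
    E (fun y => mul (f y) (g y)) = phi (f x) * E g + phi (g x) * E f.

End Defs.

(* Main.v *)
Require Import Defs.
From HB Require Import structures.
From mathcomp Require Import all_boot all_order all_algebra.
From mathcomp Require Import all_classical all_reals all_analysis.
From mathcomp Require Import complex.
From mathcomp Require Import lra.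
Import Order.TTheory GRing.Theory Num.Theory.
Import numFieldNormedType.Exports.
Local Open Scope ring_scope.
Local Open Scope complex_scope.

Section Aux.
Variable R : realType.

Lemma ge0_RE {z : R[i]} : 0 <= z -> z = (complex.Re z)%:C.
Proof. move=> /[dup] h /ger0_Im; case: z h => a b /= _ ->; by []. Qed.

Lemma ge0_Re (z : R[i]) : 0 <= z -> 0 <= complex.Re z.
Proof. by move=> h; rewrite -ler0c -ge0_RE. Qed.

Variable A : completeNormedModType R[i].
Definition nr (a : A) : R := complex.Re `|a|.
Lemma nrE a : `|a| = (nr a)%:C.
Proof. exact: ge0_RE. Qed.
Lemma nr_ge0 a : 0 <= nr a.
Proof. exact: ge0_Re. Qed.
Lemma nrD a b : nr (a + b) <= nr a + nr b.
Proof. by rewrite -lecR rmorphD /= -!nrE ler_normD. Qed.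
Lemma nr0 a : nr a = 0 -> a = 0.
Proof. by move=> h; apply/normr0_eq0; rewrite nrE h. Qed.
Lemma nrZ (k : R[i]) a : nr (k *: a) = complex.Re `|k| * nr a.
Proof. by apply: complexI; rewrite rmorphM /= -nrE -ge0_RE // normrZ. Qed.
Lemma nrN a : nr (- a) = nr a.
Proof. by rewrite /nr normrN. Qed.

Variable mul : A -> A -> A.
Hypothesis hA : banach_algebra_mul mul.

Lemma nrM a b : nr (mul a b) <= nr a * nr b.
Proof. by case: hA => _ h; rewrite -lecR rmorphM /= -!nrE. Qed.

Lemma mulN a b : mul a (- b) = - mul a b.
Proof. case: hA => -[_ _ _ _ h] _; by rewrite -scaleN1r h scaleN1r. Qed.
Lemma mulDr a b c : mul a (b + c) = mul a b + mul a c.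
Proof. by case: hA => -[_ h _ _ _] _. Qed.
Lemma mul0 a : mul a 0 = 0.
Proof. case: hA => -[_ _ _ _ h] _; by have := h 0 a 0; rewrite !scale0r. Qed.
Lemma mulB a b c : mul a (b - c) = mul a b - mul a c.
Proof. by rewrite mulDr mulN. Qed.
Lemma mul_sum a n (u : nat -> A) : mul a (\sum_(0 <= k < n) u k) = \sum_(0 <= k < n) mul a (u k).
Proof.
elim: n => [|n IH]; first by rewrite !big_geq // mul0.
by rewrite !big_nat_recr //= mulDr IH.
Qed.


Fixpoint pw (b : A) (k : nat) : A := if k is k'.+1 then mul b (pw b k') else b.

Lemma pw_bound b k : nr (pw b k) <= nr b ^+ k.+1.
Proof.
elim: k => [|k IH] /=; first by rewrite expr1.
by rewrite exprS; apply: le_trans (nrM _ _) _; rewrite ler_wpM2l ?nr_ge0.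
Qed.

Lemma series_pw b n : series (pw b) n.+1 = b + mul b (series (pw b) n).
Proof.
rewrite /series /= big_nat_recl // mul_sum; congr (_ + _).
Qed.

Lemma nr_sum (r : seq nat) (P : pred nat) (F : nat -> A) :
  nr (\sum_(i <- r | P i) F i) <= \sum_(i <- r | P i) nr (F i).
Proof.
apply: (big_ind2 (fun x y => nr x <= y)).
- by rewrite /nr normr0.
- by move=> x1 x2 y1 y2 h1 h2; apply: le_trans (nrD _ _) (lerD h1 h2).
- by [].
Qed.

Lemma fixp b : nr b < 1 -> exists c, c = b + mul b c.
Proof.
move=> hb; set q := nr b.
have hcv : cvgn (series (pw b)).
  apply/cauchy_cvgP/cauchy_seriesP => e e0.
  have e'0 : 0 < complex.Re e.
    by move: e0; rewrite ltcE => /andP[_].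
  have gq : cvgn (series (geometric q q)).
    by apply: is_cvg_geometric_series; rewrite ger0_norm ?nr_ge0.
  move/cauchy_cvgP/cauchy_seriesP: gq => /(_ _ e'0).
  apply: filterS => -[n m] /= h.
  rewrite nrE (ge0_RE (ltW e0)) ltcR.
  apply: le_lt_trans h.
  apply: le_trans (ler_norm _).
  apply: le_trans (nr_sum _ _ _) _.
  apply: ler_sum => k _; rewrite /geometric -exprS; exact: pw_bound.
exists (limn (series (pw b))).
set c := limn _.
apply/eqP; rewrite -subr_eq0; apply/eqP/nr0.
set z := c - _.
apply/le_anti/andP; split; last exact: nr_ge0.
rewrite leNgt; apply/negP => hz.
have ep : 0 < (nr z / 2)%:C by rewrite ltcR divr_gt0.
move/cvgrPdist_lt: hcv => /(_ _ ep) [N _ HN].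
have h1 := HN N (leqnn N); have h2 := HN N.+1 (leqnSn N).
rewrite /= nrE ltcR in h1; rewrite /= nrE ltcR in h2.
have ez : z = (c - series (pw b) N.+1) - mul b (c - series (pw b) N).
  by rewrite /z series_pw mulB !opprD !opprK !addrA [RHS]addrAC subrK.
have h3 : nr z <= nr (c - series (pw b) N.+1) + q * nr (c - series (pw b) N).
  rewrite {1}ez; apply: le_trans (nrD _ _) _; rewrite nrN lerD2l; exact: nrM.
have h4 : q * nr (c - series (pw b) N) <= nr (c - series (pw b) N).
  by rewrite -[leRHS]mul1r ler_wpM2r ?nr_ge0 ?ltW.
lra.
Qed.

Variable phi : A -> R[i].
Hypothesis hphi : in_Delta mul phi.

Lemma phi_bound a : `|phi a| <= `|a|.
Proof.
rewrite (ge0_RE (normr_ge0 (phi a))) nrE lecR leNgt; apply/negP => h.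
set t := complex.Re `|phi a| in h.
have t0 : 0 < t by apply: le_lt_trans (nr_ge0 a) h.
have pa0 : phi a != 0.
  by apply: contraTneq t0 => e; rewrite /t e normr0 /= ltxx.
set b := (phi a)^-1 *: a.
have hb : nr b < 1.
  rewrite /b nrZ normfV (ge0_RE (normr_ge0 (phi a))) -/t -fmorphV /=.
  by rewrite mulrC (ltr_pdivrMr _ _ t0) mul1r.
have pb : phi b = 1 by case: hphi => _ hZ _ _; rewrite /b hZ mulVf.
have [c hc] := fixp b hb.
case: hphi => hD _ hM _.
have := congr1 phi hc; rewrite hD hM pb mul1r.
move=> /(congr1 (fun v => v - phi c)); rewrite subrr addrK => /esym/eqP.
by rewrite oner_eq0.
Qed.

Lemma phi_sub a b : phi (a - b) = phi a - phi b.
Proof.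
case: hphi => hD hZ _ _.
by rewrite hD -scaleN1r hZ mulN1r.
Qed.

Lemma lip_phi (X : Type) (d : X -> X -> R) (f : X -> A) :
  is_lip d f -> @is_lip R X d R[i]^o (fun y => phi (f y)).
Proof.
case=> -[B hB] [L hL]; split; [exists B | exists L] => y.
  exact: le_trans (phi_bound _) (hB y).
move=> z; rewrite /= -phi_sub; exact: le_trans (phi_bound _) (hL y z).
Qed.

End Aux.
Arguments ge0_RE {R z} _.
Arguments nr {R A} _.
Arguments nrE {R A} _.
Arguments nr_ge0 {R A} _.

Theorem theorem2p17 (R : realType) (X : Type) (d : X -> X -> R)
  (hd : is_metric d) (x : X)
  (A : completeNormedModType R[i]) (mul : A -> A -> A)
  (hA : banach_algebra_mul mul)
  (phi : A -> R[i]) (hphi : in_Delta mul phi)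
  (D : (X -> R[i]) -> R[i]) (hD : bounded_linear_lip d D) :
  point_derivation d x D <->
  point_derivation_A d x mul phi (fun f : X -> A => D (fun y => phi (f y))).
Proof.
split.
- move=> hpd f g hf hg /=.
  have -> : (fun y => phi (mul (f y) (g y))) = (fun y => phi (f y) * phi (g y)).
    by apply: funext => y; case: hphi => _ _ hM _; rewrite hM.
  by apply: hpd; [exact: (@lip_phi R A mul hA phi hphi X d f hf) | exact: (@lip_phi R A mul hA phi hphi X d g hg)].
- move=> hpa f g hf hg.
  have [a0 pa0] : exists a, phi a != 0 by case: hphi.
  set e := (phi a0)^-1 *: a0.
  have pe : phi e = 1 by case: hphi => _ hZ _ _; rewrite /e hZ mulVf.
  have lipe : forall h : X -> R[i], @is_lip R X d R[i]^o h ->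
      is_lip d (fun y => h y *: e).
    move=> h [[B hB] [L hL]]; split.
      exists (B * nr e) => y; rewrite normrZ nrE rmorphM /=.
      by rewrite ler_wpM2r // ler0c nr_ge0.
    exists (L * nr e) => y z; rewrite -scalerBl normrZ nrE.
    rewrite mulrAC rmorphM /=.
    by rewrite ler_wpM2r // ler0c nr_ge0.
  have ph : forall h : X -> R[i], (fun y => phi (h y *: e)) = h.
    by move=> h; apply: funext => y; case: hphi => _ hZ _ _; rewrite hZ pe mulr1.
  have := hpa _ _ (lipe f hf) (lipe g hg); rewrite /= !ph.
  have -> : (fun y => phi (mul (f y *: e) (g y *: e))) = (fun y => f y * g y).
    apply: funext => y; case: hphi => _ hZ hM _.
    by rewrite hM !hZ mulVf // !mulr1.
  case: hphi => _ hZ _ _; by rewrite !hZ mulVf // !mulr1.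
Qed.
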